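(* The problem of learning an unknown LPTS $U$ (up to strong simulation equivalence) is undecidable in the active learning framework with both the Friendly Teacher condition on the teacher and the minimum-state condition on the learner: there is no learner algorithm satisfying the minimum-state condition that, for every target LPTS $U$ and every teacher obeying the framework rules and the Friendly Teacher condition, after finitely many rounds conjectures a hypothesis $H$ with $H\simeq U$.
   Context: An LPTS is $\langle S,s^0,\alpha,\tau\rangle$ with finite state set $S$, start state $s^0$, finite action set $\alpha$, finite $\tau\subseteq S\times\alpha\times\mathrm{Dist}(S)$, where $\mathrm{Dist}(S)$ is the set of discrete probability distributions on $S$ (rational probabilities); write $s\xrightarrow{a}\mu$. A stochastic tree is an LPTS whose start state is in the support of no transition's distribution and every other state is in the support of exactly one transition's distribution. Strong simulation: for $R\subseteq S_1\times S_2$, $\mu_1\sqsubseteq_R\mu_2$ iff there is $w:S_1\times S_2\to\mathbb{Q}\cap[0,1]$ with $\sum_{s_2}w(s_1,s_2)=\mu_1(s_1)$, $\sum_{s_1}w(s_1,s_2)=\mu_2(s_2)$ and $w(s_1,s_2)>0\Rightarrow s_1Rs_2$; $R$ is a strong simulation iff $s_1Rs_2$ and $s_1\xrightarrow{a}\mu_1$ imply some $s_2\xrightarrow{a}\mu_2$ with $\mu_1\sqsubseteq_R\mu_2$; $L_1\preceq L_2$ iff a strong simulation relates the start states; $L_1\simeq L_2$ iff both $L_1\preceq L_2$ and $L_2\preceq L_1$. Active learning framework: unknown target LPTS $U$; in each round the learner conjectures a hypothesis $H$; the teacher checks $H\simeq U$ and, if it fails, returns either a negative counterexample (a tree $C$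 with $C\preceq H$, $C\not\preceq U$) or a positive one (a tree $C$ with $C\preceq U$, $C\not\preceq H$); letting $\mathcal{P}$, $\mathcal{N}$ be the sets of positive and negative counterexamples returned so far, there must always exist an LPTS consistent with them (an LPTS $L$ is consistent with $\mathcal{P},\mathcal{N}$ iff $P\preceq L$ for all $P\in\mathcal{P}$ and $N\not\preceq L$ for all $N\in\mathcal{N}$), and each conjecture must be consistent with the counterexamples received so far. An execution mapping from a tree $C$ to an LPTS $L$ is a total map $M:S_C\to S_L$ such that for every transition $c\xrightarrow{a}\mu_c$ of $C$ there is a transition $M(c)\xrightarrow{a}\mu$ of $L$ with $M$ injective on $\mathrm{supp}(\mu_c)$ and $\mu_c(c')=\mu(M(c'))$ for every $c'\in\mathrm{supp}(\mu_c)$. Friendly Teacher condition: every positive counterexample returned has an execution mapping to $U$, and every negative counterexample has an execution mapping to the current hypothesis $H$. Minimum-state condition on the learner: every hypothesis $H$ conjectured is an LPTS with the minimum number of states among all LPTSes consistent with the current $\mathcal{P}$ and $\mathcal{N}$. *)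

(* Defs.v *)
From mathcomp Require Import all_boot all_order all_algebra.
Set Implicit Arguments. Unset Strict Implicit. Unset Printing Implicit Defensive.
Import Order.TTheory GRing.Theory Num.Theory.
Local Open Scope ring_scope.

(* Actions are labelled by natural numbers; each LPTS uses only finitely
   many of them (those occurring in its finite transition set). *)
Definition action := nat.

Definition is_dist (n : nat) (mu : {ffun 'I_n -> rat}) : bool :=
  [forall s, 0 <= mu s] && (\sum_(s < n) mu s == 1).

Record lpts := LPTS {
  nst : nat;
  start : 'I_nst;
  trans : seq ('I_nst * action * {ffun 'I_nst -> rat});
  trans_uniq : uniq trans;
  trans_dist : all (fun t => is_dist t.2) trans
}.

Definition in_supp n (mu : {ffun 'I_n -> rat}) (s : 'I_n) : bool := 0 < mu s.

Definition is_tree (L : lpts) : Prop :=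
  (forall t, t \in trans L -> ~~ in_supp t.2 (start L)) /\
  (forall s, s != start L ->
     count (fun t => in_supp t.2 s) (trans L) = 1%N).

Definition dist_sim n1 n2 (R : 'I_n1 -> 'I_n2 -> Prop)
    (mu1 : {ffun 'I_n1 -> rat}) (mu2 : {ffun 'I_n2 -> rat}) : Prop :=
  exists w : 'I_n1 -> 'I_n2 -> rat,
    (forall s1 s2, 0 <= w s1 s2 <= 1) /\
    (forall s1, \sum_(s2 < n2) w s1 s2 = mu1 s1) /\
    (forall s2, \sum_(s1 < n1) w s1 s2 = mu2 s2) /\
    (forall s1 s2, 0 < w s1 s2 -> R s1 s2).

Definition strong_simulation (L1 L2 : lpts)
    (R : 'I_(nst L1) -> 'I_(nst L2) -> Prop) : Prop :=
  forall s1 s2, R s1 s2 ->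
  forall a mu1, (s1, a, mu1) \in trans L1 ->
  exists mu2, (s2, a, mu2) \in trans L2 /\ dist_sim R mu1 mu2.

Definition sim (L1 L2 : lpts) : Prop :=
  exists R, strong_simulation R /\ R (start L1) (start L2).

Definition sim_equiv (L1 L2 : lpts) : Prop := sim L1 L2 /\ sim L2 L1.

Definition exec_mapping (C L : lpts) : Prop :=
  exists M : 'I_(nst C) -> 'I_(nst L),
  forall c a muc, (c, a, muc) \in trans C ->
  exists mu, (M c, a, mu) \in trans L /\
    {in in_supp muc &, injective M} /\
    (forall c', in_supp muc c' -> muc c' = mu (M c')).

(* A counterexample: (true, C) positive, (false, C) negative. *)
Definition cex := (bool * lpts)%type.

Fixpoint consistent (h : seq cex) (L : lpts) : Prop :=
  match h with
  | [::] => True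
  | (b, C) :: h' => (if b then sim C L else ~ sim C L) /\ consistent h' L
  end.

(* A (deterministic) learner maps the history of counterexamples received
   so far (in chronological order) to its next conjecture. *)
Definition learner := seq cex -> lpts.

Definition min_state_learner (lrn : learner) : Prop :=
  forall h, (exists L, consistent h L) ->
    consistent h (lrn h) /\
    (forall L, consistent h L -> (nst (lrn h) <= nst L)%N).

Definition history (c : nat -> cex) (k : nat) : seq cex :=
  [seq c i | i <- iota 0 k].

(* An infinite run of the learning game for learner lrn, target U and the
   teacher answering with counterexample c k in round k; the teacher obeys the
   framework rules and the Friendly Teacher condition, and the conjecture
   of every round fails the equivalence check. *)
Definition bad_run (lrn : learner) (U : lpts) (c : nat -> cex) : Prop :=
  forall k,
    let H := lrn (history c k) in
    ~ sim_equiv H U /\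
    is_tree (c k).2 /\
    (if (c k).1
     then sim (c k).2 U /\ ~ sim (c k).2 H /\ exec_mapping (c k).2 U
     else sim (c k).2 H /\ ~ sim (c k).2 U /\ exec_mapping (c k).2 H) /\
    (exists L, consistent (history c k.+1) L).

(* Main.v *)
Require Import Defs.
From Stdlib Require Import ClassicalEpsilon.
From mathcomp Require Import all_boot all_order all_algebra.
From mathcomp Require Import ring lra.
Set Implicit Arguments. Unset Strict Implicit. Unset Printing Implicit Defensive.
Import Order.TTheory GRing.Theory Num.Theory.
Local Open Scope ring_scope.

Lemma sum_option (X : finType) (F : option X -> rat) :
  \sum_(o : option X) F o = F None + \sum_(x : X) F (Some x).
Proof.
have -> : index_enum (option X) = None :: map Some (index_enum X).
  by rewrite /index_enum !unlock /= /option_enum; rewrite unlock.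
by rewrite big_cons big_map.
Qed.

Lemma le_sum_term (I : finType) (F : I -> rat) i :
  (forall j, 0 <= F j) -> F i <= \sum_j F j.
Proof. by move=> H; rewrite (bigD1 i) //= lerDl sumr_ge0. Qed.

Lemma sum_pick (I : finType) (F : I -> rat) :
  (forall j, 0 <= F j) -> 0 < \sum_j F j -> exists j, 0 < F j.
Proof.
move=> H Hs; case: (pickP (fun j => 0 < F j)) => [j Hj|Hn]; first by exists j.
move: Hs; rewrite big1 ?ltxx // => j _.
by apply/eqP; rewrite eq_le H andbT leNgt Hn.
Qed.

Lemma sum_delta (I : finType) (x : I) (v : rat) :
  \sum_(l : I) (if x == l then v else 0) = v.
Proof.
rewrite (bigD1 x) //= eqxx big1 ?addr0 // => l; rewrite eq_sym => /negbTE ->//.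
Qed.

Lemma dist_of (L : lpts) s a mu : (s, a, mu) \in trans L -> is_dist mu.
Proof. by move=> H; exact: (allP (trans_dist L) _ H). Qed.

Lemma dist_ge0 n (mu : {ffun 'I_n -> rat}) : is_dist mu -> forall i, 0 <= mu i.
Proof. by case/andP=> /forallP H _. Qed.

Lemma dist_sum n (mu : {ffun 'I_n -> rat}) : is_dist mu -> \sum_i mu i = 1.
Proof. by case/andP=> _ /eqP. Qed.

Lemma dist_le1 n (mu : {ffun 'I_n -> rat}) i : is_dist mu -> mu i <= 1.
Proof. by move=> D; rewrite -(dist_sum D) le_sum_term //; apply: dist_ge0. Qed.

Lemma ge0_notpos (x : rat) : 0 <= x -> ~~ (0 < x) -> x = 0.
Proof. by move=> H1 H2; apply/eqP; rewrite eq_le H1 andbT leNgt. Qed.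

Definition exec_prop (C L : lpts) (M : 'I_(nst C) -> 'I_(nst L)) : Prop :=
  forall c a muc, (c, a, muc) \in trans C ->
  exists mu, (M c, a, mu) \in trans L /\
    {in in_supp muc &, injective M} /\
    (forall c', in_supp muc c' -> muc c' = mu (M c')).
Arguments exec_prop : clear implicits.

Lemma exec_sim C L M : exec_prop C L M -> M (start C) = start L -> sim C L.
Proof.
move=> HM Hs; exists (fun x y => M x = y); split=> //.
move=> s1 s2 <- a mu1 Hin; have [mu [Hmu [Hinj Heq]]] := HM _ _ _ Hin.
exists mu; split=> //.
have D1 := dist_of Hin; have D2 := dist_of Hmu.
have g1 := dist_ge0 D1; have g2 := dist_ge0 D2.
pose w := fun x y => if M x == y then mu1 x else 0.
have wge0 : forall x y, 0 <= w x y by move=> x y; rewrite /w; case: eqP.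
have colle : forall l, \sum_x w x l <= mu l.
  move=> l; case: (pickP (fun c' => in_supp mu1 c' && (M c' == l))).
    move=> c0 /andP[Hc0 /eqP Ml]; rewrite (bigD1 c0) //= /w Ml eqxx big1 ?addr0.
      by rewrite -Ml Heq.
    move=> x Hx; case: eqP => // Mx; apply: ge0_notpos => //; apply/negP => Hpx.
    have Hxc : x = c0 by apply: Hinj; [exact: Hpx|exact: Hc0|rewrite Mx Ml].
    by rewrite Hxc eqxx in Hx.
  move=> Hn; rewrite big1 ?g2 // => x _; rewrite /w; case: eqP => // Mx.
  by apply: ge0_notpos => //; move: (Hn x); rewrite Mx eqxx andbT => /negbT.
have tot : \sum_l (mu l - \sum_x w x l) = 0.
  rewrite sumrB (dist_sum D2) exchange_big /=.
  rewrite (eq_bigr (fun x => mu1 x)) ?(dist_sum D1) ?subrr // => x _.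
  by rewrite /w sum_delta.
have col : forall l, \sum_x w x l = mu l.
  move=> l; apply/eqP; rewrite eq_sym -subr_eq0; apply/eqP.
  by move/psumr_eq0P: tot; apply => // j _; rewrite subr_ge0.
exists w; split; [|split; [|split]].
- move=> x y; rewrite wge0 /w; case: eqP => _ //; exact: dist_le1.
- by move=> x; rewrite /w sum_delta.
- exact: col.
- by move=> x y; rewrite /w; case: eqP => // _; rewrite ltxx.
Qed.

Lemma sim_trans A B C : sim A B -> sim B C -> sim A C.
Proof.
move=> [R1 [S1 R1s]] [R2 [S2 R2s]].
exists (fun x z => exists y, R1 x y /\ R2 y z); split; last by exists (start B).
move=> x z [y [Rxy Ryz]] a mu1 Hin.
have [mu2 [Hin2 [w1 [w1b [w1r [w1c w1p]]]]]] := S1 _ _ Rxy _ _ Hin.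
have [mu3 [Hin3 [w2 [w2b [w2r [w2c w2p]]]]]] := S2 _ _ Ryz _ _ Hin2.
exists mu3; split=> //.
have D1 := dist_of Hin; have D2 := dist_of Hin2.
have g2 := dist_ge0 D2.
have w1ge0 : forall i j, 0 <= w1 i j by move=> i j; case/andP: (w1b i j).
have w2ge0 : forall i j, 0 <= w2 i j by move=> i j; case/andP: (w2b i j).
have w1z : forall i j, mu2 j = 0 -> w1 i j = 0.
  move=> i j H; apply/eqP; rewrite eq_le w1ge0 andbT -H -w1c.
  by apply: le_sum_term => k.
have w2z : forall i j, mu2 i = 0 -> w2 i j = 0.
  move=> i j H; apply/eqP; rewrite eq_le w2ge0 andbT -H -w2r.
  by apply: le_sum_term => k.
pose t := fun i k j => if mu2 j == 0 then 0 else w1 i j * w2 j k / mu2 j.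
pose w := fun i k => \sum_j t i k j.
have tge0 : forall i k j, 0 <= t i k j.
  move=> i k j; rewrite /t; case: eqP => // _.
  by rewrite divr_ge0 // mulr_ge0.
have wge0 : forall i k, 0 <= w i k by move=> i k; apply: sumr_ge0.
have wr : forall i, \sum_k w i k = mu1 i.
  move=> i; rewrite /w exchange_big /= -w1r; apply: eq_bigr => j _.
  have [H|H] := eqVneq (mu2 j) 0.
    by rewrite /t H eqxx big1 // w1z.
  rewrite /t (negbTE H) -mulr_suml -mulr_sumr w2r mulfK //.
have wc : forall k, \sum_i w i k = mu3 k.
  move=> k; rewrite /w exchange_big /= -w2c; apply: eq_bigr => j _.
  have [H|H] := eqVneq (mu2 j) 0.
    by rewrite /t H eqxx big1 // w2z.
  rewrite /t (negbTE H) -mulr_suml -mulr_suml w1c.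
  by rewrite mulrC mulrA mulVf ?mul1r.
exists w; split; [|split; [|split]] => //.
- move=> i k; rewrite wge0 /=; apply: le_trans (dist_le1 i D1).
  by rewrite -wr; apply: (@le_sum_term _ (w i) k (wge0 i)).
- move=> i k /sum_pick [] // j; rewrite /t; case: eqP; first by rewrite ltxx.
  move=> _ Hp; exists j; split.
    apply: w1p; rewrite lt_def w1ge0 andbT; apply/eqP => H0.
    by move: Hp; rewrite H0 !mul0r ltxx.
  apply: w2p; rewrite lt_def w2ge0 andbT; apply/eqP => H0.
  by move: Hp; rewrite H0 mulr0 mul0r ltxx.
Qed.

Lemma consistent_rcons h e L :
  consistent (rcons h e) L <->
  consistent h L /\ (if e.1 then sim e.2 L else ~ sim e.2 L).
Proof.
elim: h => [|[b C] h IH] /=; first by case: e => b C /=; tauto.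
by move: IH; tauto.
Qed.

Definition hasact (G : lpts) (g : 'I_(nst G)) (f : action) : bool :=
  has (fun t => (t.1.1 == g) && (t.1.2 == f)) (trans G).
Arguments hasact : clear implicits.

Lemma hasactP G g f : reflect (exists mu, (g, f, mu) \in trans G) (hasact G g f).
Proof.
apply: (iffP hasP) => [[[[s b] mu] Hin /= /andP[/eqP Hs /eqP Hb]]|[mu Hin]].
  by subst; exists mu.
by exists (g, f, mu) => //=; rewrite !eqxx.
Qed.

Definition mass (G : lpts) (nu : {ffun 'I_(nst G) -> rat}) (f : action) :=
  \sum_(g | hasact G g f) nu g.

Lemma mass_sim C G b f muC (P : pred 'I_(nst C)) :
  sim C G -> (start C, b, muC) \in trans C ->
  (forall i, P i -> 0 < muC i -> exists mu', (i, f, mu') \in trans C) ->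
  exists nu, (start G, b, nu) \in trans G /\ \sum_(i | P i) muC i <= mass nu f.
Proof.
move=> [R [SS Rs]] Hin Hf.
have [nu [Hnu [w [wb [wr [wc wp]]]]]] := SS _ _ Rs _ _ Hin.
exists nu; split=> //.
have wge0 : forall i j, 0 <= w i j by move=> i j; case/andP: (wb i j).
have key : forall i g, P i -> 0 < w i g -> hasact G g f.
  move=> i g Pi Hw.
  have Hmu : 0 < muC i.
    by apply: (lt_le_trans Hw); rewrite -wr; apply: (@le_sum_term _ (w i) g (wge0 i)).
  have [mu' Hmu'] := Hf i Pi Hmu.
  have [mu2 [Hmu2 _]] := SS _ _ (wp _ _ Hw) _ _ Hmu'.
  by apply/hasactP; exists mu2.
have -> : \sum_(i | P i) muC i = \sum_(i | P i) \sum_(g | hasact G g f) w i g.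
  apply: eq_bigr => i Pi; rewrite -wr (bigID (fun g => hasact G g f)) /=.
  rewrite [X in _ + X]big1 ?addr0 // => g Hg; apply: ge0_notpos => //.
  by apply/negP => Hw; rewrite (key i g Pi Hw) in Hg.
apply: (@le_trans _ _ (\sum_i \sum_(g | hasact G g f) w i g)).
  rewrite [X in _ <= X](bigID P) /= lerDl sumr_ge0 // => i _.
  by apply: sumr_ge0 => g _.
by rewrite exchange_big /mass; apply: ler_sum => g _; rewrite wc.
Qed.

Section Mk.
Variables (S : finType) (r : S) (tr : seq (S * action * {ffun S -> rat})).
Definition is_distS (mu : {ffun S -> rat}) :=
  [forall s, 0 <= mu s] && (\sum_s mu s == 1).
Hypotheses (Hu : uniq tr) (Hd : all (fun t => is_distS t.2) tr).

Definition convd (mu : {ffun S -> rat}) : {ffun 'I_#|S| -> rat} :=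
  [ffun i => mu (enum_val i)].
Definition conv (t : S * action * {ffun S -> rat}) :=
  (enum_rank t.1.1, t.1.2, convd t.2).

Lemma sumS (F : S -> rat) : \sum_(i < #|S|) F (enum_val i) = \sum_s F s.
Proof. by rewrite -big_enum_val. Qed.

Lemma sumS_cond (P : pred S) (F : S -> rat) :
  \sum_(i < #|S| | P (enum_val i)) F (enum_val i) = \sum_(s | P s) F s.
Proof. by rewrite -big_enum_val_cond. Qed.

Lemma conv_inj : injective conv.
Proof.
move=> [[s1 b1] m1] [[s2 b2] m2] [/enum_rank_inj -> -> Hm]; congr (_, _, _).
apply/ffunP => s; move/ffunP: Hm => /(_ (enum_rank s)).
by rewrite !ffunE enum_rankK.
Qed.

Lemma mk_uniq : uniq (map conv tr).
Proof. by rewrite map_inj_uniq //; exact: conv_inj. Qed.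

Lemma mk_dist : all (fun t => is_dist t.2) (map conv tr).
Proof.
apply/allP => t /mapP [t0 Ht0 ->]; move/allP: Hd => /(_ _ Ht0) /andP[/forallP H0 /eqP H1].
apply/andP; split; first by apply/forallP => i; rewrite ffunE.
by rewrite (eq_bigr (fun i => t0.2 (enum_val i))) ?sumS ?H1 // => i _; rewrite ffunE.
Qed.

Definition mk := @LPTS #|S| (enum_rank r) (map conv tr) mk_uniq mk_dist.

Lemma mk_in s b mu : (s, b, mu) \in tr -> (enum_rank s, b, convd mu) \in trans mk.
Proof. by move=> H; apply: (map_f conv H). Qed.

Lemma mk_tree :
  (forall t, t \in tr -> ~~ (0 < t.2 r)) ->
  (forall s, s != r -> count (fun t : S * action * {ffun S -> rat} => 0 < t.2 s) tr = 1%N) -> is_tree mk.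
Proof.
move=> H1 H2; split.
  move=> t /mapP [t0 Ht0 ->]; rewrite /in_supp /= ffunE enum_rankK.
  exact: H1.
move=> i Hi; rewrite /= count_map -(H2 (enum_val i)); last first.
  by apply: contra Hi => /eqP Hr; rewrite /= -Hr enum_valK.
by apply: eq_count => t; rewrite /in_supp /= ffunE.
Qed.

Lemma mk_exec L (M : S -> 'I_(nst L)) :
  (forall s b mu, (s, b, mu) \in tr -> exists nu, (M s, b, nu) \in trans L /\
     (forall x y, 0 < mu x -> 0 < mu y -> M x = M y -> x = y) /\
     (forall x, 0 < mu x -> mu x = nu (M x))) ->
  exec_prop mk L (fun i => M (enum_val i)).
Proof.
move=> HM c b muc /mapP [[[s b0] mu] Hin [-> -> ->]].
have [nu [Hnu [Hinj Heq]]] := HM _ _ _ Hin.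
exists nu; rewrite enum_rankK; split=> //; split.
  move=> x y Hx Hy Hxy. move: Hx Hy; rewrite !unfold_in /in_supp /= !ffunE => Hx Hy.
  by apply: enum_val_inj; apply: Hinj.
by move=> x; rewrite /in_supp !ffunE => Hx; apply: Heq.
Qed.
End Mk.


Definition aA : action := 0%N.
Definition aC : action := 1%N.
Definition aD : action := 2%N.

Definition dirac n (j : 'I_n) : {ffun 'I_n -> rat} := [ffun i => if i == j then 1 else 0].

Lemma dirac_dist n (j : 'I_n) : is_dist (dirac j).
Proof.
apply/andP; split; first by apply/forallP => i; rewrite ffunE; case: eqP.
by rewrite (eq_bigr (fun i => if j == i then 1 else 0)) ?sum_delta // => i _;
  rewrite ffunE eq_sym.
Qed.

Definition u0 : 'I_4 := @Ordinal 4 0 isT.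
Definition u1 : 'I_4 := @Ordinal 4 1 isT.
Definition u2 : 'I_4 := @Ordinal 4 2 isT.
Definition u3 : 'I_4 := @Ordinal 4 3 isT.

Definition muU : {ffun 'I_4 -> rat} :=
  [ffun i => if val i == 1%N then 1/4 else if val i == 2%N then 1/2
             else if val i == 3%N then 1/4 else 0].

Definition trU := [:: (u0, aA, muU); (u1, aD, dirac u2); (u3, aC, dirac u2)].

Lemma trU_uniq : uniq trU. Proof. by []. Qed.

Lemma trU_dist : all (fun t => is_dist t.2) trU.
Proof.
rewrite /= !dirac_dist !andbT; apply/andP; split.
  by apply/forallP => i; rewrite ffunE; case: ifP => _ //; case: ifP => _ //; case: ifP.
by rewrite !big_ord_recr big_ord0 /= !ffunE.
Qed.

Definition U := @LPTS 4 u0 trU trU_uniq trU_dist.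

Definition t0 : 'I_6 := @Ordinal 6 0 isT.
Definition t1 : 'I_6 := @Ordinal 6 1 isT.
Definition t2 : 'I_6 := @Ordinal 6 2 isT.
Definition t3 : 'I_6 := @Ordinal 6 3 isT.
Definition t4 : 'I_6 := @Ordinal 6 4 isT.
Definition t5 : 'I_6 := @Ordinal 6 5 isT.

Definition muT : {ffun 'I_6 -> rat} :=
  [ffun i => if val i == 1%N then 1/4 else if val i == 2%N then 1/2
             else if val i == 3%N then 1/4 else 0].

Definition trT := [:: (t0, aA, muT); (t1, aD, dirac t4); (t3, aC, dirac t5)].

Lemma trT_uniq : uniq trT. Proof. by []. Qed.

Lemma trT_dist : all (fun t => is_dist t.2) trT.
Proof.
rewrite /= !dirac_dist !andbT; apply/andP; split.
  by apply/forallP => i; rewrite ffunE; case: ifP => _ //; case: ifP => _ //; case: ifP.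
by rewrite !big_ord_recr big_ord0 /= !ffunE.
Qed.

Definition T := @LPTS 6 t0 trT trT_uniq trT_dist.

Lemma T_tree : is_tree T.
Proof.
split.
  by move=> t; rewrite !inE => /or3P [] /eqP -> //=; rewrite /in_supp ffunE.
case=> [[|[|[|[|[|[|k]]]]]] Hk] //= _; rewrite /in_supp !ffunE //.
Qed.

Definition fT (i : 'I_6) : 'I_4 :=
  match val i with 0 => u0 | 1 => u1 | 2 => u2 | 3 => u3 | _ => u2 end%N.

Lemma T_exec : exec_prop T U fT.
Proof.
move=> c b muc; rewrite !inE => /or3P [] /eqP [-> -> ->].
- exists muU; split; first by rewrite !inE eqxx.
  split.
    move=> x y; rewrite !unfold_in /in_supp.
    by case: x => [[|[|[|[|[|[|k]]]]]] Hk]; case: y => [[|[|[|[|[|[|l]]]]]] Hl];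
      rewrite !ffunE //= => _ _ _; apply: val_inj.
  by case=> [[|[|[|[|[|[|k]]]]]] Hk]; rewrite /in_supp !ffunE.
- exists (dirac u2); split; first by rewrite !inE eqxx orbT.
  split.
    move=> x y; rewrite !unfold_in /in_supp !ffunE.
    by do 2! case: eqP => // ->.
  by case=> [[|[|[|[|[|[|k]]]]]] Hk]; rewrite /in_supp !ffunE.
- exists (dirac u2); split; first by rewrite !inE eqxx !orbT.
  split.
    move=> x y; rewrite !unfold_in /in_supp !ffunE.
    by do 2! case: eqP => // ->.
  by case=> [[|[|[|[|[|[|k]]]]]] Hk]; rewrite /in_supp !ffunE.
Qed.

Lemma T_simU : sim T U.
Proof. exact: (exec_sim T_exec). Qed.

Definition clamp (q : rat) : rat := Num.max 0 (Num.min q 1).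

Lemma clamp_id q : 0 <= q <= 1 -> clamp q = q.
Proof.
case/andP=> H0 H1; rewrite /clamp.
have -> : Num.min q 1 = q by apply/min_idPl.
by apply/max_idPr.
Qed.

Lemma clamp01 q : 0 <= clamp q <= 1.
Proof. by rewrite /clamp le_max lexx /= ge_max ler01 /= ge_min lexx orbT. Qed.

Definition x0 : 'I_2 := @Ordinal 2 0 isT.
Definition y0 : 'I_2 := @Ordinal 2 1 isT.

Definition mdist (q : rat) : {ffun 'I_2 -> rat} :=
  [ffun i => if val i == 0%N then q else 1 - q].

Definition trM q := [:: (x0, aA, mdist (clamp q)); (x0, aC, dirac x0); (y0, aD, dirac y0)].

Lemma trM_uniq q : uniq (trM q). Proof. by []. Qed.

Lemma trM_dist q : all (fun t => is_dist t.2) (trM q).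
Proof.
rewrite /= !dirac_dist !andbT; have /andP[H0 H1] := clamp01 q.
apply/andP; split.
  by apply/forallP => i; rewrite ffunE; case: ifP => _ //; rewrite subr_ge0.
by rewrite !big_ord_recr big_ord0 /= !ffunE /= add0r addrC subrK.
Qed.

Definition Mq q := @LPTS 2 x0 (trM q) (trM_uniq q) (trM_dist q).

Definition RT (i : 'I_6) (j : 'I_2) : bool :=
  match val i, val j with
  | 0, 0 | 1, 1 | 3, 0 => true
  | 2, _ | 4, _ | 5, _ => true
  | _, _ => false end%N.

Definition wroot q (i : 'I_6) (j : 'I_2) : rat :=
  match val i, val j with
  | 1%N, 1%N => 1/4 | 2%N, 0%N => q - 1/4 | 2%N, 1%N => 3/4 - q
  | 3%N, 0%N => 1/4 | _, _ => 0 end.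

Lemma T_simM q : 1/4 <= q <= 3/4 -> sim T (Mq q).
Proof.
case/andP=> Hq1 Hq2.
have Hc : clamp q = q by apply: clamp_id; apply/andP; split; lra.
exists (fun i j => RT i j); split; last by [].
move=> i j Rij b mu1; rewrite !inE => /or3P [] /eqP [Hi -> ->]; subst i.
- have -> : j = x0 by apply: val_inj; move: Rij; case: j => [[|[|k]] Hk].
  exists (mdist (clamp q)); split; first by rewrite !inE eqxx.
  exists (wroot q); rewrite Hc; split; [|split; [|split]].
  + case=> [[|[|[|[|[|[|k]]]]]] Hk]; case=> [[|[|l]] Hl] //=;
      rewrite /wroot /=; apply/andP; split; lra.
  + case=> [[|[|[|[|[|[|k]]]]]] Hk] //=; rewrite !big_ord_recr big_ord0 /= !ffunE /wroot /=;
      lra.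
  + case=> [[|[|l]] Hl] //=; rewrite !big_ord_recr big_ord0 /= !ffunE /wroot /=; lra.
  + case=> [[|[|[|[|[|[|k]]]]]] Hk]; case=> [[|[|l]] Hl] //=; rewrite ltxx.
- have -> : j = y0 by apply: val_inj; move: Rij; case: j => [[|[|k]] Hk].
  exists (dirac y0); split; first by rewrite !inE eqxx orbT.
  exists (fun i' j' => if (i' == t4) && (j' == y0) then 1 else 0).
  split; [|split; [|split]].
  + by move=> ? ?; case: ifP.
  + move=> i'; rewrite !big_ord_recr big_ord0 /= !ffunE.
    by case: i' => [[|[|[|[|[|[|k]]]]]] Hk].
  + move=> j'; rewrite !big_ord_recr big_ord0 /= !ffunE.
    by case: j' => [[|[|k]] Hk].
  + move=> i' j'; case: ifP; last by rewrite ltxx.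
    by case/andP => /eqP -> /eqP ->.
- have -> : j = x0 by apply: val_inj; move: Rij; case: j => [[|[|k]] Hk].
  exists (dirac x0); split; first by rewrite !inE eqxx !orbT.
  exists (fun i' j' => if (i' == t5) && (j' == x0) then 1 else 0).
  split; [|split; [|split]].
  + by move=> ? ?; case: ifP.
  + move=> i'; rewrite !big_ord_recr big_ord0 /= !ffunE.
    by case: i' => [[|[|[|[|[|[|k]]]]]] Hk].
  + move=> j'; rewrite !big_ord_recr big_ord0 /= !ffunE.
    by case: j' => [[|[|k]] Hk].
  + move=> i' j'; case: ifP; last by rewrite ltxx.
    by case/andP => /eqP -> /eqP ->.
Qed.

Lemma U_a nu : (start U, aA, nu) \in trans U -> nu = muU.
Proof. by rewrite /= !inE => /or3P [] /eqP [] //. Qed.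

Lemma massU_C : @mass U muU aC = 1/4.
Proof. by rewrite /mass big_mkcond !big_ord_recr big_ord0 /= !ffunE /= !add0r. Qed.

Lemma massU_D : @mass U muU aD = 1/4.
Proof. by rewrite /mass big_mkcond !big_ord_recr big_ord0 /= !ffunE /= !addr0 add0r. Qed.

Lemma M_a q nu : (start (Mq q), aA, nu) \in trans (Mq q) -> nu = mdist (clamp q).
Proof. by rewrite /= !inE => /or3P [] /eqP [] //. Qed.

Lemma massM_C q : @mass (Mq q) (mdist (clamp q)) aC = clamp q.
Proof. by rewrite /mass big_mkcond !big_ord_recr big_ord0 /= !ffunE /= add0r addr0. Qed.

Lemma massM_D q : @mass (Mq q) (mdist (clamp q)) aD = 1 - clamp q.
Proof. by rewrite /mass big_mkcond !big_ord_recr big_ord0 /= !ffunE /= !add0r. Qed.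

Lemma two_states n (g0 g1 g : 'I_n) : (n <= 2)%N -> g0 != g1 -> (g == g0) || (g == g1).
Proof.
move=> Hn H01; have := ltn_ord g; have := ltn_ord g0; have := ltn_ord g1.
move: H01; rewrite -!val_eqE /=.
case: g0 g1 g => [[|[|?]] ?] [[|[|?]] ?] [[|[|?]] ?] //= _ h1 h2 h3;
  move: (leq_trans h1 Hn) (leq_trans h2 Hn) (leq_trans h3 Hn) => //.
Qed.

Lemma H_struct H : sim T H -> (nst H <= 2)%N ->
  exists mu, (start H, aA, mu) \in trans H /\ 1 <= mass mu aC + mass mu aD.
Proof.
move=> [R [SS Rs]] Hn.
have Hin : (start T, aA, muT) \in trans T by rewrite !inE eqxx.
have [mu [Hmu [w [wb [wr [wc wp]]]]]] := SS _ _ Rs _ _ Hin.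
exists mu; split=> //.
have D := dist_of Hmu; have g2 := dist_ge0 D.
have wge0 : forall i j, 0 <= w i j by move=> i j; case/andP: (wb i j).
have hC : forall g, 0 < w t3 g -> hasact H g aC.
  move=> g Hw; have Ht : (t3, aC, dirac t5) \in trans T by rewrite !inE eqxx !orbT.
  have [mu2 [Hmu2 _]] := SS _ _ (wp _ _ Hw) _ _ Ht.
  by apply/hasactP; exists mu2.
have hD : forall g, 0 < w t1 g -> hasact H g aD.
  move=> g Hw; have Ht : (t1, aD, dirac t4) \in trans T by rewrite !inE eqxx !orbT.
  have [mu2 [Hmu2 _]] := SS _ _ (wp _ _ Hw) _ _ Ht.
  by apply/hasactP; exists mu2.
have r3 : \sum_g w t3 g = 1/4 by rewrite wr ffunE.
have r1 : \sum_g w t1 g = 1/4 by rewrite wr ffunE.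
have colge : forall g, w t3 g + w t1 g <= mu g.
  move=> g; rewrite -wc (bigD1 t3) //= (bigD1 t1) //= addrA lerDl.
  by apply: sumr_ge0 => i _.
have mge : forall f g, hasact H g f -> mu g <= mass mu f.
  move=> f g Hg; rewrite /mass (bigD1 g) //= lerDl.
  by apply: sumr_ge0 => i _.
case: (pickP (fun g => ~~ hasact H g aC && ~~ hasact H g aD)) => [g0 /andP[n0 n1]|Hall].
  have z3 : w t3 g0 = 0.
    by apply: ge0_notpos => //; apply: contra n0; apply: hC.
  have z1 : w t1 g0 = 0.
    by apply: ge0_notpos => //; apply: contra n1; apply: hD.
  have [g1 Hg1] : exists g1, 0 < w t3 g1.
    by apply: sum_pick => //; rewrite r3.
  have H01 : g0 != g1 by apply/eqP => E; move: Hg1; rewrite -E z3 ltxx.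
  have sum2 : forall F : 'I_(nst H) -> rat, \sum_g F g = F g0 + F g1.
    move=> F; rewrite (bigD1 g0) //= (bigD1 g1) 1?eq_sym //= big_pred0 ?addr0 //.
    move=> g; apply/negP => /andP[a1 a2]; move: (two_states g Hn H01).
    by rewrite (negbTE a1) (negbTE a2).
  have e3 : w t3 g1 = 1/4 by rewrite -r3 sum2 z3 add0r.
  have e1 : w t1 g1 = 1/4 by rewrite -r1 sum2 z1 add0r.
  have c1 := hC g1 Hg1.
  have d1 : hasact H g1 aD by apply: hD; rewrite e1.
  have := colge g1; rewrite e3 e1 => Hm.
  have := mge _ _ c1; have := mge _ _ d1; lra.
rewrite -(dist_sum D) /mass [X in _ <= X + _]big_mkcond [X in _ <= _ + X]big_mkcond.
rewrite -big_split /=; apply: ler_sum => g _.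
move: (Hall g) => /negbT; rewrite negb_and !negbK.
by case/orP => ->; case: ifP => _; rewrite ?lerDl ?lerDr ?g2 ?addr0 ?add0r.
Qed.


Section Neg.
Variables (H : lpts) (mu : {ffun 'I_(nst H) -> rat}) (f : action).
Hypotheses (Hf : f != aA) (Hmu : (start H, aA, mu) \in trans H).

Local Notation n := (nst H).

Definition fdist (h : 'I_n) : option {ffun 'I_n -> rat} :=
  ohead [seq t.2 | t <- trans H & (t.1.1 == h) && (t.1.2 == f)].

Lemma fdist_in h nu : fdist h = Some nu -> (h, f, nu) \in trans H.
Proof.
rewrite /fdist; case E: [seq t <- trans H | _] => [|t s] //= [<-].
have : t \in [seq t <- trans H | (t.1.1 == h) && (t.1.2 == f)] by rewrite E mem_head.
rewrite mem_filter => /andP[/andP[/eqP <- /eqP <-]].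
by case: t {E} => [[? ?] ?].
Qed.

Lemma fdist_has h : isSome (fdist h) = hasact H h f.
Proof.
rewrite /fdist /hasact has_filter.
by case: [seq t <- trans H | _].
Qed.

Definition S0 := option ('I_n * option 'I_n).

Definition used (s0 : S0) : bool :=
  match s0 with
  | None => true
  | Some (h, None) => 0 < mu h
  | Some (h, Some h') => (0 < mu h) && (if fdist h is Some nu then 0 < nu h' else false)
  end.

Definition usedp : {pred S0} := fun s => used s.
Definition S := {x in usedp}.

Definition rt : S := @exist _ _ None isT.
Definition child (h : 'I_n) : S := insubd rt (Some (h, None)).

Definition muR : {ffun S -> rat} :=
  [ffun s => if val s is Some (h, None) then mu h else 0].
Definition muG (h : 'I_n) : {ffun S -> rat} :=
  [ffun s => match val s with
     | Some (h0, Some h') => if h0 == h then (if fdist h is Some nu then nu h' else 0) else 0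
     | _ => 0 end].

Definition kids := [seq h <- enum 'I_n | (0 < mu h) && isSome (fdist h)].
Definition trN := (rt, aA, muR) :: [seq (child h, f, muG h) | h <- kids].

Lemma child_val h : 0 < mu h -> val (child h) = Some (h, None).
Proof. by move=> Hh; rewrite /child insubdK. Qed.


Lemma sumS0 (F : S0 -> rat) : (forall s0, ~~ used s0 -> F s0 = 0) ->
  \sum_(s : S) F (val s) =
  F None + \sum_h (F (Some (h, None)) + \sum_h' F (Some (h, Some h'))).
Proof.
move=> HF.
rewrite -(big_sub_cond usedp xpredT F) big_mkcond /=.
rewrite (eq_bigr F); last first.
  by move=> s _; rewrite andbT; case: ifP => // /negbT /HF ->.
rewrite sum_option; congr (_ + _).
rewrite (eq_bigr (fun p => F (Some (p.1, p.2)))); last by case.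
rewrite -(pair_bigA _ (fun h o => F (Some (h, o)))) /=; apply: eq_bigr => h _.
by rewrite sum_option.
Qed.

Lemma mu_ge0 : forall h, 0 <= mu h.
Proof. exact: dist_ge0 (dist_of Hmu). Qed.

Lemma kidsP h : (h \in kids) = (0 < mu h) && isSome (fdist h).
Proof. by rewrite mem_filter mem_enum andbT. Qed.

Lemma trN_uniq : uniq trN.
Proof.
rewrite /trN /=; apply/andP; split; last first.
  rewrite map_inj_in_uniq; first by rewrite filter_uniq // enum_uniq.
  move=> h h'; rewrite !kidsP => /andP[H1 _] /andP[H2 _] [E _].
  by move: (congr1 val E); rewrite !child_val // => -[].
apply/negP; move/mapP => -[h _ [_ E _]]; move: Hf; by rewrite E eqxx.
Qed.

Lemma trN_dist : all (fun t => is_distS t.2) trN.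
Proof.
rewrite /= andbC; apply/andP; split.
  apply/allP => t /mapP [h Hh ->] /=; move: Hh; rewrite kidsP => /andP[Hh].
  case E: (fdist h) => [nu|] // _.
  have D := dist_of (fdist_in E).
  apply/andP; split.
    apply/forallP => s; rewrite ffunE; case: (val s) => [[h0 [h'|]]|] //.
    by case: eqP => // _; rewrite E; apply: dist_ge0.
  pose F := fun s0 : S0 => match s0 with
     | Some (h0, Some h') => if h0 == h then nu h' else 0 | _ => 0 end.
  rewrite (eq_bigr (fun s => F (val s))); last first.
    by move=> s _; rewrite ffunE E /F; case: (val s) => [[? [?|]]|].
  apply/eqP; rewrite (@sumS0 F) /F /=.
    rewrite add0r (eq_bigr (fun h0 => if h0 == h then \sum_h' nu h' else 0)).
      by rewrite -big_mkcond big_pred1_eq (dist_sum D).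
    by move=> h0 _; rewrite add0r; case: eqP => // _; rewrite big1.
  move=> [[h0 [h'|]]|] //=; case: eqP => // ->; rewrite Hh E /=.
  by move=> /negbTE Hn; apply: ge0_notpos; [apply: dist_ge0 | rewrite Hn].
apply/andP; split.
  by apply/forallP => s; rewrite ffunE; case: (val s) => [[h0 [h'|]]|] //=; exact: mu_ge0.
pose F := fun s0 : S0 => if s0 is Some (h, None) then mu h else 0.
rewrite (eq_bigr (fun s => F (val s))); last by move=> s _; rewrite ffunE.
apply/eqP; rewrite (@sumS0 F) /F /= ?add0r.
  rewrite (eq_bigr (fun h => mu h)) ?(dist_sum (dist_of Hmu)) //.
  by move=> h _; rewrite big1 ?addr0.
move=> [[h0 [h'|]]|] //= Hn; apply: ge0_notpos => //; exact: mu_ge0.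
Qed.

Definition N := mk rt trN_uniq trN_dist.

Lemma usedS (s : S) : used (val s).
Proof. exact: (valP s). Qed.

Lemma N_tree : is_tree N.
Proof.
apply: mk_tree.
  move=> t; rewrite inE => /orP [/eqP -> /=|/mapP [h _ ->] /=]; by rewrite ffunE.
move=> s Hs; rewrite /trN /= count_map ffunE.
have U := usedS s.
case E: (val s) U => [[h [h'|]]|] /= U.
- move: U => /andP[Hh]; case F: (fdist h) => [nu|] // Hnu.
  rewrite add0n (eq_count (a2 := pred1 h)).
    rewrite count_uniq_mem; last by rewrite filter_uniq // enum_uniq.
    by rewrite mem_filter mem_enum Hh F.
  move=> h0 /=; rewrite ffunE E; case: (eqVneq h h0) => [<-|Hne].
    by rewrite F /= Hnu.
  by rewrite ltxx.
- rewrite U add1n; congr (_.+1); apply/eqP; rewrite -leqn0 leqNgt -has_count.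
  by apply/hasP => -[h0 _]; rewrite /= ffunE E ltxx.
- by move: Hs; have -> : s = rt by apply: val_inj; rewrite E.
Qed.

Definition MN (s : S) : 'I_n :=
  match val s with None => start H | Some (h, None) => h | Some (_, Some h') => h' end.

Lemma N_exec_prop : exec_prop N H (fun i => MN (enum_val i)).
Proof.
apply: mk_exec => s b m; rewrite inE => /orP [/eqP [-> -> ->]|/mapP [h Hk [-> -> ->]]].
  exists mu; split; first by [].
  split.
    move=> x y; rewrite !ffunE /MN.
    case Ex: (val x) => [[hx [?|]]|]; rewrite ?ltxx // => _.
    case Ey: (val y) => [[hy [?|]]|]; rewrite ?ltxx // => _ Exy.
    by apply: val_inj; rewrite Ex Ey Exy.
  move=> x; rewrite !ffunE /MN.
  by case Ex: (val x) => [[hx [?|]]|]; rewrite ?ltxx.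
move: (Hk); rewrite kidsP => /andP[Hh]; case F: (fdist h) => [nu|] // _.
exists nu; rewrite /MN child_val //; split; first exact: fdist_in.
split.
  move=> x y; rewrite !ffunE /MN.
  case Ex: (val x) => [[hx [hx'|]]|]; rewrite ?ltxx //.
  case: eqP => [Hx|_]; rewrite ?ltxx // F => _.
  case Ey: (val y) => [[hy [hy'|]]|]; rewrite ?ltxx //.
  case: eqP => [Hy|_]; rewrite ?ltxx // => _ Exy.
  by apply: val_inj; rewrite Ex Ey Hx Hy Exy.
move=> x; rewrite !ffunE /MN.
case Ex: (val x) => [[hx [hx'|]]|]; rewrite ?ltxx //.
by case: eqP => [_|_]; rewrite ?ltxx // F.
Qed.

Lemma N_exec : exec_mapping N H.
Proof. by exists (fun i => MN (enum_val i)); exact: N_exec_prop. Qed.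

Lemma N_sim : sim N H.
Proof. by apply: (exec_sim N_exec_prop); rewrite /= enum_rankK. Qed.

Definition isf (s : S) : bool := if val s is Some (h, None) then hasact H h f else false.

Lemma N_mass G : sim N G ->
  exists nu, (start G, aA, nu) \in trans G /\ mass mu f <= mass nu f.
Proof.
move=> HS.
have Hin : (start N, aA, convd muR) \in trans N by apply: mk_in; rewrite mem_head.
have Hside : forall i : 'I_(nst N), isf (enum_val i) -> 0 < convd muR i ->
    exists mu', (i, f, mu') \in trans N.
  move=> i; rewrite /isf ffunE.
  case E: (val (enum_val i)) => [[h [h'|]]|] // Hh Hp.
  move: Hp; rewrite ffunE E => Hp.
  have Hk : h \in kids by rewrite kidsP Hp fdist_has Hh.
  have Hc : child h = enum_val i by apply: val_inj; rewrite child_val.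
  exists (convd (muG h)); rewrite -[i]enum_valK -Hc; apply: mk_in.
  by rewrite inE; apply/orP; right; apply/mapP; exists h.
have [nu [Hnu Hle]] := mass_sim HS Hin Hside.
exists nu; split=> //; apply: le_trans Hle.
rewrite (eq_bigr (fun i => muR (enum_val i))); last by move=> i _; rewrite ffunE.
rewrite (sumS_cond isf muR) big_mkcond /=.
pose F := fun s0 : S0 => if s0 is Some (h, None) then (if hasact H h f then mu h else 0) else 0.
rewrite (eq_bigr (fun s => F (val s))); last first.
  by move=> s _; rewrite /isf /F ffunE; case: (val s) => [[? [?|]]|] //; case: ifP.
rewrite (@sumS0 F) /F /= ?add0r.
  rewrite /mass big_mkcond le_eqVlt; apply/orP; left; apply/eqP.
  by apply: eq_bigr => h _; rewrite big1 ?addr0.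
move=> [[h0 [h'|]]|] //= Hn; case: ifP => // _; apply: ge0_notpos => //; exact: mu_ge0.
Qed.
End Neg.


Lemma aC_ne : aC != aA. Proof. by []. Qed.
Lemma aD_ne : aD != aA. Proof. by []. Qed.

Lemma massU_le f : @mass U muU f <= 1/4.
Proof.
rewrite /mass big_mkcond !big_ord_recr big_ord0 /= !ffunE /=.
case: f => [|[|[|?]]] /=; rewrite ?add0r ?addr0 //.
Qed.

Section Main.
Variable lrn : learner.
Hypothesis Hmin : min_state_learner lrn.

Definition step (h : seq cex) (q1 q2 : rat) : cex * rat * rat :=
  match excluded_middle_informative (sim T (lrn h) /\ (nst (lrn h) <= 2)%N) with
  | right _ => ((true, T), q1, q2)
  | left Hs =>
    let (mu, Hm) := constructive_indefinite_description _
                       (H_struct (proj1 Hs) (proj2 Hs)) in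
    let m := (q1 + q2) / 2 in
    if m < mass mu aC then ((false, N aC_ne (proj1 Hm)), q1, m)
    else ((false, N aD_ne (proj1 Hm)), (m + q2) / 2, q2)
  end.

Definition inv (h : seq cex) (q1 q2 : rat) : Prop :=
  1/4 <= q1 /\ q1 < q2 /\ q2 <= 3/4 /\
  forall q, q1 <= q <= q2 -> consistent h (Mq q).

Lemma round h q1 q2 : inv h q1 q2 ->
  let r := step h q1 q2 in let H := lrn h in
  ~ sim_equiv H U /\ is_tree r.1.1.2 /\
  (if r.1.1.1
   then sim r.1.1.2 U /\ ~ sim r.1.1.2 H /\ exec_mapping r.1.1.2 U
   else sim r.1.1.2 H /\ ~ sim r.1.1.2 U /\ exec_mapping r.1.1.2 H) /\
  inv (rcons h r.1.1) r.1.2 r.2.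
Proof.
move=> [Hq1 [Hq12 [Hq2 Hcons]]] /=.
have Hc1 : consistent h (Mq q1) by apply: Hcons; rewrite lexx ltW.
have [HcH HnH] := Hmin (ex_intro _ _ Hc1).
have Hn2 : (nst (lrn h) <= 2)%N := HnH _ Hc1.
rewrite /step; case: excluded_middle_informative => [Hs|nS].
  case: constructive_indefinite_description => mu [Hmu Hm1] /=.
  set m := (q1 + q2) / 2.
  have Hm1' : q1 < m by rewrite /m; lra.
  have Hm2' : m < q2 by rewrite /m; lra.
  have HNU : forall f (Hf : f != aA), 1/4 < mass mu f -> ~ sim (N Hf Hmu) U.
    move=> f Hf Hlt HS; have [nu [Hnu Hle]] := N_mass HS.
    move: Hle; rewrite (U_a Hnu) => Hle; have := massU_le f; lra.
  have Hequiv : forall f (Hf : f != aA), ~ sim (N Hf Hmu) U -> ~ sim_equiv (lrn h) U.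
    by move=> f Hf Hn [HU _]; apply: Hn; apply: sim_trans (N_sim Hf Hmu) HU.
  case: ifP => Hlt /=.
    have Hc : 1/4 < mass mu aC by lra.
    split; first exact: (Hequiv _ aC_ne (HNU _ aC_ne Hc)).
    split; first exact: N_tree.
    split; first by split; [exact: N_sim | split; [exact: HNU | exact: N_exec]].
    split; first by [].
    split; first by [].
    split; first by lra.
    move=> q /andP[Hq Hq']; apply/consistent_rcons; split.
      by apply: Hcons; rewrite Hq /=; lra.
    move=> /= HS; have [nu [Hnu Hle]] := N_mass HS.
    move: Hle; rewrite (M_a Hnu) massM_C clamp_id; first by lra.
    by apply/andP; split; lra.
  have Hd : 1 - m <= mass mu aD by move/negbT: Hlt; rewrite -leNgt; lra.
  have Hc : 1/4 < mass mu aD by lra.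
  split; first exact: (Hequiv _ aD_ne (HNU _ aD_ne Hc)).
  split; first exact: N_tree.
  split; first by split; [exact: N_sim | split; [exact: HNU | exact: N_exec]].
  split; first by lra.
  split; first by lra.
  split; first by [].
  move=> q /andP[Hq Hq']; apply/consistent_rcons; split.
    by apply: Hcons; rewrite Hq' andbT; lra.
  move=> /= HS; have [nu [Hnu Hle]] := N_mass HS.
  move: Hle; rewrite (M_a Hnu) massM_D clamp_id; first by lra.
  by apply/andP; split; lra.
have nT : ~ sim T (lrn h) by move=> HT; apply: nS.
split; first by move=> [_ HU]; apply: nT; exact: sim_trans T_simU HU.
split; first exact: T_tree.
split; first by split; [exact: T_simU | split; [exact: nT | exists fT; exact: T_exec]].
do 3! (split; first by []).
move=> q Hq; apply/consistent_rcons; split; first exact: Hcons.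
apply: T_simM; case/andP: Hq => /= Ha Hb; apply/andP; split; lra.
Qed.

Fixpoint st (k : nat) : seq cex * rat * rat :=
  match k with
  | 0 => ([::], 1/4, 3/4)
  | k'.+1 => let: (h, q1, q2) := st k' in
             let: (e, a, b) := step h q1 q2 in (rcons h e, a, b)
  end.

Definition cc k := (step (st k).1.1 (st k).1.2 (st k).2).1.1.

Lemma st_inv k : inv (st k).1.1 (st k).1.2 (st k).2 /\ history cc k = (st k).1.1.
Proof.
elim: k => [|k [Hi Hh]].
  split; last by [].
  rewrite /inv /=; split; [by []|split; [by []|split; [by []|by []]]].
have Hc : history cc k.+1 = rcons (history cc k) (cc k).
  by rewrite /history -addn1 iotaD map_cat cats1.
rewrite Hc Hh /cc /=; move: Hi.
case: (st k) => [[h q1] q2] /= Hi.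
have := round Hi; case: (step h q1 q2) => [[e a] b] /=.
by move=> [_ [_ [_ Hi']]].
Qed.
End Main.

Theorem theorem6 :
  forall lrn : learner, min_state_learner lrn ->
  exists (U : lpts) (c : nat -> cex), bad_run lrn U c.
Proof.
move=> lrn Hmin; exists U, (cc lrn) => k /=.
have [Hi Hh] := st_inv Hmin k.
have [Hi' _] := st_inv Hmin k.+1.
rewrite Hh; have [H1 [H2 [H3 _]]] := round Hmin Hi.
split; first exact: H1. split; first exact: H2. split; first exact: H3.
have [[_ [Hlt [_ Hc]]] Hh'] := st_inv Hmin k.+1.
exists (Mq (st lrn k.+1).1.2); have := Hc (st lrn k.+1).1.2; rewrite lexx ltW // -Hh'; move=> H; exact: H.
Qed.
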